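(* Let $\mathcal K$ be a topological Kuranishi atlas on $X$. Then the maps $|\mathrm{pr}_{\mathcal K}|:|\mathbf E_{\mathcal K}|\to|\mathcal K|$ and $|0_{\mathcal K}|,|\mathfrak s_{\mathcal K}|:|\mathcal K|\to|\mathbf E_{\mathcal K}|$ (induced by $\mathrm{pr}_I$, $0_I$, $\mathfrak s_I$) are well defined and continuous, and satisfy $|\mathrm{pr}_{\mathcal K}|\circ|\mathfrak s_{\mathcal K}|=|\mathrm{pr}_{\mathcal K}|\circ|0_{\mathcal K}|=\mathrm{id}_{|\mathcal K|}$. The set $Z:=\{p\in|\mathcal K|:|\mathfrak s_{\mathcal K}|(p)=|0_{\mathcal K}|(p)\}$ equals $\pi_{\mathcal K}\big(\bigsqcup_{I\in\mathcal I_{\mathcal K}}\{I\}\times\mathfrak s_I^{-1}(0_I)\big)$, and the quotient topology on $Z$ (obtained from $\bigsqcup_I\{I\}\times\mathfrak s_I^{-1}(0_I)$ with the relative topology, modulo the equivalence relation generated by the relations $(I,x)\sim(J,\phi_{IJ}(x))$ with $x\in U_{IJ}\cap\mathfrak s_I^{-1}(0_I)$) coincides with the subspace topology from $|\mathcal K|$. Moreover the map $\iota_{\mathcal K}:X\to|\mathcal K|$, $p\mapsto\pi_{\mathcal K}(I,\psi_I^{-1}(p))$, is independent of the choice of $I\in\mathcal I_{\mathcal K}$ with $p\in F_I$, and is a homeomorphism from $X$ onto $Z$ (with the subspace topology).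
   Context: Notation: for subsets $V'\subset V$ of a topological space, $V'\sqsubset V$ means the closure of $V'$ in $V$ is compact. $X$ is a compact metrizable space. Charts: a topological Kuranishi chart for $X$ with open footprint $F\subset X$ is a tuple $\mathbf K=(U,\mathbb E,\mathfrak s,\psi)$ where $U$ is a separable, locally compact, metrizable space; $\mathbb E$ is a separable, locally compact, metrizable space with continuous maps $\mathrm{pr}:\mathbb E\to U$ and $0:U\to\mathbb E$ with $\mathrm{pr}\circ0=\mathrm{id}_U$; $\mathfrak s:U\to\mathbb E$ is continuous with $\mathrm{pr}\circ\mathfrak s=\mathrm{id}_U$; and $\psi$ is a homeomorphism from $\mathfrak s^{-1}(0):=\{x\in U:\mathfrak s(x)=0(x)\}$ onto $F$. Coordinate changes: for charts $\mathbf K_I,\mathbf K_J$ (components indexed by $I,J$) with $F_I\cap F_J\neq\emptyset$, a coordinate change $\widehat\Phi_{IJ}:\mathbf K_I\to\mathbf K_J$ consists of an open set $U_{IJ}\subset U_I$ with $U_{IJ}\cap\mathfrak s_I^{-1}(0_I)=\psi_I^{-1}(F_I\cap F_J)$ and a topological embedding $\widehat\Phi_{IJ}:\mathrm{pr}_I^{-1}(U_{IJ})\to\mathbb E_J$ such that there is a topological embedding $\phi_{IJ}:U_{IJ}\to U_J$ with $\mathrm{pr}_J\circ\widehat\Phi_{IJ}=\phi_{IJ}\circ\mathrm{pr}_I$, $0_J\circ\phi_{IJ}=\widehat\Phi_{IJ}\circ0_I$ and $\mathfrak s_J\circ\phi_{IJ}=\widehat\Phi_{IJ}\circ\mathfrak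 s_I$ on $U_{IJ}$, and $\phi_{IJ}=\psi_J^{-1}\circ\psi_I$ on $U_{IJ}\cap\mathfrak s_I^{-1}(0_I)$. Atlases: a covering family of basic charts is a finite family $(\mathbf K_i)_{i=1,\dots,N}$ of charts whose footprints cover $X$; $\mathcal I_{\mathcal K}$ is the set of nonempty $I\subset\{1,\dots,N\}$ with $F_I:=\bigcap_{i\in I}F_i\neq\emptyset$. Transition data consist of a chart $\mathbf K_J$ with footprint $F_J$ for each $J\in\mathcal I_{\mathcal K}$ with $|J|\ge2$ (and $\mathbf K_{\{i\}}:=\mathbf K_i$), and a coordinate change $\widehat\Phi_{IJ}:\mathbf K_I\to\mathbf K_J$ for all $I\subsetneq J$ in $\mathcal I_{\mathcal K}$. We set $U_{II}:=U_I$, $\phi_{II}:=\mathrm{id}_{U_I}$. For $I\subsetneq J\subsetneq K$ let $U_{IJK}:=U_{IJ}\cap\phi_{IJ}^{-1}(U_{JK})$. The triple satisfies the weak cocycle condition if $\widehat\Phi_{JK}\circ\widehat\Phi_{IJ}=\widehat\Phi_{IK}$ on $\mathrm{pr}_I^{-1}(U_{IJK}\cap U_{IK})$; the cocycle condition if in addition $U_{IJK}\subset U_{IK}$; the strong cocycle condition if in addition $U_{IJK}=U_{IK}$. A weak topological Kuranishi atlas $\mathcal K$ is a covering family with transition data satisfying the weak cocycle condition for all such triples; a topological Kuranishi atlas is one satisfying the cocycle condition for all triples. Virtual neighbourhood: for a topological Kuranishi atlas, $|\mathcal K|$ is the quotient of $\bigsqcup_{I\in\mathcal I_{\mathcal K}}U_I=\{(I,x):x\in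 U_I\}$ by the equivalence relation generated by $(I,x)\sim(J,\phi_{IJ}(x))$ for $I\subset J$, $x\in U_{IJ}$, with the quotient topology and projection $\pi_{\mathcal K}$; similarly $|\mathbf E_{\mathcal K}|$ is the quotient of $\bigsqcup_I\mathbb E_I$ by the relation generated by $(I,e)\sim(J,\widehat\Phi_{IJ}(e))$ for $e\in\mathrm{pr}_I^{-1}(U_{IJ})$, with projection $\pi_{\mathbf E_{\mathcal K}}$. *)

(* Defs.v *)
From mathcomp Require Import all_boot.
From Stdlib Require Import Reals Relation_Operators List.

Set Implicit Arguments.
Unset Strict Implicit.


Definition topology (T : Type) := (T -> Prop) -> Prop.

Definition IsTopology (T : Type) (op : topology T) : Prop :=
  op (fun _ => True) /\
  (forall A B, op A -> op B -> op (fun x => A x /\ B x)) /\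
  (forall F : (T -> Prop) -> Prop,
     (forall A, F A -> op A) -> op (fun x => exists A, F A /\ A x)).

Definition compact_set (T : Type) (op : topology T) (K : T -> Prop) : Prop :=
  forall F : (T -> Prop) -> Prop,
    (forall A, F A -> op A) ->
    (forall x, K x -> exists A, F A /\ A x) ->
    exists l : list (T -> Prop),
      (forall A, In A l -> F A) /\ (forall x, K x -> exists A, In A l /\ A x).

Definition compact_space (T : Type) (op : topology T) : Prop :=
  compact_set op (fun _ => True).

Definition metrizable (T : Type) (op : topology T) : Prop :=
  exists d : T -> T -> R,
    (forall x y, (0 <= d x y)%R) /\
    (forall x y, d x y = 0%R <-> x = y) /\
    (forall x y, d x y = d y x) /\
    (forall x y z, (d x z <= d x y + d y z)%R) /\
    (forall V, op V <->
       forall x, V x -> exists eps : R, (0 < eps)%R /\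
                 forall y, (d x y < eps)%R -> V y).

Definition separable (T : Type) (op : topology T) : Prop :=
  exists D : T -> Prop,
    (exists f : nat -> option T, forall x, D x -> exists n, f n = Some x) /\
    (forall V, op V -> (exists x, V x) -> exists x, V x /\ D x).

Definition locally_compact (T : Type) (op : topology T) : Prop :=
  forall x, exists V K, op V /\ V x /\ compact_set op K /\ (forall y, V y -> K y).

(* topology of the subspace P, expressed on predicates of T:
   V is open in the subspace P iff it is the trace of an open set *)
Definition sub_open (T : Type) (op : topology T) (P V : T -> Prop) : Prop :=
  exists W, op W /\ forall x, P x -> (V x <-> W x).

Definition continuous (A B : Type) (opA : topology A) (opB : topology B)
  (f : A -> B) : Prop :=
  forall W, opB W -> opA (fun x => W (f x)).

Definition cont_on (A B : Type) (opA : topology A) (P : A -> Prop)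
  (opB : topology B) (Q : B -> Prop) (f : A -> B) : Prop :=
  (forall x, P x -> Q (f x)) /\
  forall W, opB W -> sub_open opA P (fun x => W (f x)).

Definition homeo_on (A B : Type) (opA : topology A) (P : A -> Prop)
  (opB : topology B) (Q : B -> Prop) (f : A -> B) : Prop :=
  exists g : B -> A,
    cont_on opA P opB Q f /\ cont_on opB Q opA P g /\
    (forall x, P x -> g (f x) = x) /\ (forall y, Q y -> f (g y) = y).

Definition embedding_on (A B : Type) (opA : topology A) (P : A -> Prop)
  (opB : topology B) (f : A -> B) : Prop :=
  cont_on opA P opB (fun _ => True) f /\
  (forall x y, P x -> P y -> f x = f y -> x = y) /\
  forall V, sub_open opA P V ->
    exists W, opB W /\ forall x, P x -> (V x <-> W (f x)).

Unset Implicit Arguments.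

(* Basic charts are indexed by 'I_N; charts of the transition data by  *)
(* the sets I : {set 'I_N} (the basic chart K_i is the chart of [set i]). *)

Record TopKAtlas (X : Type) (tX : topology X) (N : nat) := {
  F0 : 'I_N -> X -> Prop;
  U : {set 'I_N} -> Type;
  E : {set 'I_N} -> Type;
  tU : forall I, topology (U I);
  tE : forall I, topology (E I);
  pr : forall I, E I -> U I;
  zr : forall I, U I -> E I;
  sc : forall I, U I -> E I;
  psi : forall I, U I -> X;                     (* footprint map on s_I^-1(0_I) *)
  UIJ : forall I J : {set 'I_N}, U I -> Prop;
  phi : forall I J : {set 'I_N}, U I -> U J;    (* phi_IJ (relevant on U_IJ) *)
  Phi : forall I J : {set 'I_N}, E I -> E J;    (* Phi_IJ (relevant on pr^-1 U_IJ) *)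
}.

Arguments F0 {X tX N}.
Arguments U {X tX N}.
Arguments E {X tX N}.
Arguments tU {X tX N}.
Arguments tE {X tX N}.
Arguments pr {X tX N} _ {I}.
Arguments zr {X tX N} _ {I}.
Arguments sc {X tX N} _ {I}.
Arguments psi {X tX N} _ {I}.
Arguments UIJ {X tX N} _ I J.
Arguments phi {X tX N} _ I J.
Arguments Phi {X tX N} _ I J.

Section Atlas.
Variables (X : Type) (tX : topology X) (N : nat) (A : TopKAtlas X tX N).

Definition FI (I : {set 'I_N}) (p : X) : Prop := forall i, i \in I -> F0 A i p.

Definition inK (I : {set 'I_N}) : Prop := I != set0 /\ exists p, FI I p.

Definition Zs (I : {set 'I_N}) (x : U A I) : Prop := sc A x = zr A x.

Definition IsChart (I : {set 'I_N}) : Prop :=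
  IsTopology (tU A I) /\ IsTopology (tE A I) /\
  separable (tU A I) /\ locally_compact (tU A I) /\ metrizable (tU A I) /\
  separable (tE A I) /\ locally_compact (tE A I) /\ metrizable (tE A I) /\
  continuous (tE A I) (tU A I) (pr A) /\
  continuous (tU A I) (tE A I) (zr A) /\
  continuous (tU A I) (tE A I) (sc A) /\
  (forall x : U A I, pr A (zr A x) = x) /\
  (forall x : U A I, pr A (sc A x) = x) /\
  homeo_on (tU A I) (Zs I) tX (FI I) (psi A).

Definition IsCoordChange (I J : {set 'I_N}) : Prop :=
  (tU A I) (UIJ A I J) /\
  (forall x, (UIJ A I J x /\ Zs I x) <-> (Zs I x /\ FI J (psi A x))) /\
  embedding_on (tE A I) (fun e => UIJ A I J (pr A e)) (tE A J) (Phi A I J) /\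
  embedding_on (tU A I) (UIJ A I J) (tU A J) (phi A I J) /\
  (forall e, UIJ A I J (pr A e) -> pr A (Phi A I J e) = phi A I J (pr A e)) /\
  (forall x, UIJ A I J x -> zr A (phi A I J x) = Phi A I J (zr A x)) /\
  (forall x, UIJ A I J x -> sc A (phi A I J x) = Phi A I J (sc A x)) /\
  (forall x, UIJ A I J x -> Zs I x ->
     Zs J (phi A I J x) /\ psi A (phi A I J x) = psi A x).

Definition UIJK (I J K : {set 'I_N}) (x : U A I) : Prop :=
  UIJ A I J x /\ UIJ A J K (phi A I J x).

(* cocycle condition (weak cocycle condition + U_IJK subset U_IK) *)
Definition Cocycle (I J K : {set 'I_N}) : Prop :=
  (forall e, UIJK I J K (pr A e) -> UIJ A I K (pr A e) ->
     Phi A J K (Phi A I J e) = Phi A I K e) /\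
  (forall x, UIJK I J K x -> UIJ A I K x).

Definition IsTopKAtlas : Prop :=
  (forall i, tX (F0 A i)) /\
  (forall p, exists i, F0 A i p) /\
  (forall I, inK I -> IsChart I) /\
  (forall I J, inK I -> inK J -> I \proper J -> IsCoordChange I J) /\
  (forall I J K, inK I -> inK J -> inK K -> I \proper J -> J \proper K ->
     Cocycle I J K).

Definition Idx := {I : {set 'I_N} | inK I}.

Definition DU := {I : Idx & U A (proj1_sig I)}.
Definition DE := {I : Idx & E A (proj1_sig I)}.

Definition DU_top : topology DU :=
  fun W => forall I : Idx, tU A (proj1_sig I) (fun x => W (existT _ I x)).
Definition DE_top : topology DE :=
  fun W => forall I : Idx, tE A (proj1_sig I) (fun e => W (existT _ I e)).

Definition stepK (a b : DU) : Prop :=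
  proj1_sig (projT1 a) \proper proj1_sig (projT1 b) /\
  UIJ A _ (proj1_sig (projT1 b)) (projT2 a) /\
  projT2 b = phi A _ _ (projT2 a).

Definition stepE (a b : DE) : Prop :=
  proj1_sig (projT1 a) \proper proj1_sig (projT1 b) /\
  UIJ A _ (proj1_sig (projT1 b)) (pr A (projT2 a)) /\
  projT2 b = Phi A _ _ (projT2 a).

Definition simK := clos_refl_sym_trans DU stepK.
Definition simE := clos_refl_sym_trans DE stepE.

(* quotients, realised as the sets of equivalence classes *)
Definition VK := {C : DU -> Prop | exists t, C = simK t}.
Definition VE := {C : DE -> Prop | exists t, C = simE t}.

Definition piVK (t : DU) : VK := exist _ (simK t) (ex_intro _ t erefl).
Definition piVE (t : DE) : VE := exist _ (simE t) (ex_intro _ t erefl).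

Definition VK_top : topology VK := fun V => DU_top (fun t => V (piVK t)).
Definition VE_top : topology VE := fun V => DE_top (fun t => V (piVE t)).

Definition prDU (e : DE) : DU := existT _ (projT1 e) (pr A (projT2 e)).
Definition zrDU (t : DU) : DE := existT _ (projT1 t) (zr A (projT2 t)).
Definition scDU (t : DU) : DE := existT _ (projT1 t) (sc A (projT2 t)).

Definition ZDU (t : DU) : Prop := Zs _ (projT2 t).
Definition DU0 := {t : DU | ZDU t}.

Definition step0 (a b : DU0) : Prop := stepK (proj1_sig a) (proj1_sig b).

End Atlas.

Arguments FI {X tX N} A I p.
Arguments inK {X tX N} A I.
Arguments Zs {X tX N} A {I} x.
Arguments IsTopKAtlas {X tX N} A.
Arguments Idx {X tX N} A.
Arguments DU {X tX N} A.
Arguments DE {X tX N} A.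
Arguments DU_top {X tX N} A _.
Arguments DE_top {X tX N} A _.
Arguments stepK {X tX N} A a b.
Arguments stepE {X tX N} A a b.
Arguments simK {X tX N} A _ _.
Arguments simE {X tX N} A _ _.
Arguments VK {X tX N} A.
Arguments VE {X tX N} A.
Arguments piVK {X tX N} A t.
Arguments piVE {X tX N} A t.
Arguments VK_top {X tX N} A _.
Arguments VE_top {X tX N} A _.
Arguments prDU {X tX N} A e.
Arguments zrDU {X tX N} A t.
Arguments scDU {X tX N} A t.
Arguments ZDU {X tX N} A t.
Arguments DU0 {X tX N} A.
Arguments step0 {X tX N} A a b.

(* Main.v *)
Require Import Defs.
From mathcomp Require Import all_boot.
From Stdlib Require Import Reals Relation_Operators List.
From Stdlib Require Import Classical ClassicalEpsilon FunctionalExtensionality PropExtensionality ProofIrrelevance Lra.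

Lemma pred_ext (T : Type) (P Q : T -> Prop) : (forall x, P x <-> Q x) -> P = Q.
Proof. move=> H; apply: functional_extensionality => x; apply: propositional_extensionality; exact: H. Qed.

Lemma piVK_eq {X tX N} (A : TopKAtlas X tX N) a b : simK A a b -> piVK A a = piVK A b.
Proof.
move=> H; unfold piVK; apply: subset_eq_compat.
apply: pred_ext => x; split=> Hx.
- apply: rst_trans; [apply: rst_sym; exact H| exact Hx].
- apply: rst_trans; [exact H| exact Hx].
Qed.

Lemma piVK_inv {X tX N} (A : TopKAtlas X tX N) a b : piVK A a = piVK A b -> simK A a b.
Proof.
move=> H; have H2 := f_equal (@proj1_sig _ _) H; simpl in H2.
have : simK A b b by apply: rst_refl.
rewrite -H2 => H3; exact H3.
Qed.

Lemma piVE_eq {X tX N} (A : TopKAtlas X tX N) a b : simE A a b -> piVE A a = piVE A b.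
Proof.
move=> H; unfold piVE; apply: subset_eq_compat.
apply: pred_ext => x; split=> Hx.
- apply: rst_trans; [apply: rst_sym; exact H| exact Hx].
- apply: rst_trans; [exact H| exact Hx].
Qed.

Lemma piVE_inv {X tX N} (A : TopKAtlas X tX N) a b : piVE A a = piVE A b -> simE A a b.
Proof.
move=> H; have H2 := f_equal (@proj1_sig _ _) H; simpl in H2.
have : simE A b b by apply: rst_refl.
rewrite -H2 => H3; exact H3.
Qed.

Lemma VK_surj {X tX N} (A : TopKAtlas X tX N) (p : VK A) : exists t, piVK A t = p.
Proof.
case: p => C [t Ht]; exists t; unfold piVK; apply: subset_eq_compat; by rewrite Ht.
Qed.

Lemma VE_surj {X tX N} (A : TopKAtlas X tX N) (p : VE A) : exists t, piVE A t = p.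
Proof.
case: p => C [t Ht]; exists t; unfold piVE; apply: subset_eq_compat; by rewrite Ht.
Qed.

Definition repK {X tX N} (A : TopKAtlas X tX N) (p : VK A) : DU A :=
  proj1_sig (constructive_indefinite_description _ (VK_surj A p)).
Lemma repK_spec {X tX N} (A : TopKAtlas X tX N) p : piVK A (repK A p) = p.
Proof. exact: (proj2_sig (constructive_indefinite_description _ (VK_surj A p))). Qed.
Definition repE {X tX N} (A : TopKAtlas X tX N) (p : VE A) : DE A :=
  proj1_sig (constructive_indefinite_description _ (VE_surj A p)).
Lemma repE_spec {X tX N} (A : TopKAtlas X tX N) p : piVE A (repE A p) = p.
Proof. exact: (proj2_sig (constructive_indefinite_description _ (VE_surj A p))). Qed.

Lemma cc_of {X tX N} (A : TopKAtlas X tX N) (HA : IsTopKAtlas A) (I J : Idx A) :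
  proj1_sig I \proper proj1_sig J -> IsCoordChange _ _ _ A (proj1_sig I) (proj1_sig J).
Proof.
move=> H; case: HA => _ [_ [_ [H4 _]]]; apply: H4 => //; [exact (proj2_sig I)|exact (proj2_sig J)].
Qed.

Lemma ch_of {X tX N} (A : TopKAtlas X tX N) (HA : IsTopKAtlas A) (I : Idx A) :
  IsChart _ _ _ A (proj1_sig I).
Proof. case: HA => _ [_ [H3 _]]; apply: H3; exact (proj2_sig I). Qed.

Definition ZE {X tX N} (A : TopKAtlas X tX N) (a : DE A) : Prop :=
  projT2 a = zr A (pr A (projT2 a)).

Lemma stepE_ZE {X tX N} (A : TopKAtlas X tX N) (HA : IsTopKAtlas A) a b :
  stepE A a b -> (ZE A a <-> ZE A b).
Proof.
case: a => I e; case: b => J f; rewrite /stepE /ZE /=.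
move=> [Hp [Hu ->]].
have [_ [_ [[_ [HinjE _]] [_ [HprP [HzP [HsP _]]]]]]] := cc_of A HA I J Hp.
have chI := ch_of A HA I.
case: chI => _ [_ [_ [_ [_ [_ [_ [_ [_ [_ [_ [Hpz _]]]]]]]]]]].
split=> H.
- rewrite HprP // HzP //. by rewrite -H.
- apply: HinjE => //. by rewrite Hpz.
  rewrite -HzP //. rewrite -HprP //.
Qed.

Lemma simE_ZE {X tX N} (A : TopKAtlas X tX N) (HA : IsTopKAtlas A) a b :
  simE A a b -> (ZE A a <-> ZE A b).
Proof.
elim=> {a b} [a b H|a|a b _ IH|a b c _ IH1 _ IH2].
- exact: stepE_ZE.
- done.
- tauto.
- tauto.
Qed.

Lemma stepK_Z {X tX N} (A : TopKAtlas X tX N) (HA : IsTopKAtlas A) a b :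
  stepK A a b -> (ZDU A a <-> ZDU A b) /\ (ZDU A a -> psi A (projT2 a) = psi A (projT2 b)).
Proof.
case: a => I x; case: b => J y; rewrite /stepK /ZDU /=.
move=> [Hp [Hu ->]].
have [_ [_ [[_ [HinjE _]] [_ [HprP [HzP [HsP HZ]]]]]]] := cc_of A HA I J Hp.
have chI := ch_of A HA I.
case: chI => _ [_ [_ [_ [_ [_ [_ [_ [_ [_ [_ [Hpz [Hps _]]]]]]]]]]]].
split; last first.
  move=> H; by rewrite (proj2 (HZ x Hu H)).
split=> H.
- exact: (proj1 (HZ x Hu H)).
- apply: HinjE; first by rewrite Hps.
  by rewrite Hpz.
  by rewrite -HsP // -HzP.
Qed.

Lemma simK_Z {X tX N} (A : TopKAtlas X tX N) (HA : IsTopKAtlas A) a b :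
  simK A a b -> (ZDU A a <-> ZDU A b) /\ (ZDU A a -> psi A (projT2 a) = psi A (projT2 b)).
Proof.
elim=> {a b} [a b H|a|a b _ IH|a b c _ IH1 _ IH2].
- exact: stepK_Z.
- done.
- split; first tauto. move=> H; symmetry; apply: (proj2 IH); tauto.
- split; first tauto. move=> H. rewrite (proj2 IH1 H). apply: (proj2 IH2). tauto.
Qed.

Lemma step_pr {X tX N} (A : TopKAtlas X tX N) (HA : IsTopKAtlas A) a b :
  stepE A a b -> stepK A (prDU A a) (prDU A b).
Proof.
case: a => I e; case: b => J f; rewrite /stepE /stepK /prDU /=.
move=> [Hp [Hu ->]].
have [_ [_ [_ [_ [HprP _]]]]] := cc_of A HA I J Hp.
split => //; split => //. by rewrite HprP.
Qed.

Lemma step_zr {X tX N} (A : TopKAtlas X tX N) (HA : IsTopKAtlas A) a b :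
  stepK A a b -> stepE A (zrDU A a) (zrDU A b).
Proof.
case: a => I e; case: b => J f; rewrite /stepE /stepK /zrDU /=.
move=> [Hp [Hu ->]].
have [_ [_ [_ [_ [HprP [HzP _]]]]]] := cc_of A HA I J Hp.
have chI := ch_of A HA I.
case: chI => _ [_ [_ [_ [_ [_ [_ [_ [_ [_ [_ [Hpz _]]]]]]]]]]].
split => //; split; first by rewrite Hpz.
by rewrite HzP.
Qed.

Lemma step_sc {X tX N} (A : TopKAtlas X tX N) (HA : IsTopKAtlas A) a b :
  stepK A a b -> stepE A (scDU A a) (scDU A b).
Proof.
case: a => I e; case: b => J f; rewrite /stepE /stepK /scDU /=.
move=> [Hp [Hu ->]].
have [_ [_ [_ [_ [HprP [HzP [HsP _]]]]]]] := cc_of A HA I J Hp.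
have chI := ch_of A HA I.
case: chI => _ [_ [_ [_ [_ [_ [_ [_ [_ [_ [_ [Hpz [Hps _]]]]]]]]]]]].
split => //; split; first by rewrite Hps.
by rewrite HsP.
Qed.

Lemma lift_EK {X tX N} (A : TopKAtlas X tX N) (f : DE A -> DU A) :
  (forall a b, stepE A a b -> stepK A (f a) (f b)) ->
  forall a b, simE A a b -> simK A (f a) (f b).
Proof.
move=> H a b; elim=> {a b} [a b Hab|a|a b _ IH|a b c _ IH1 _ IH2].
- apply: rst_step; exact: H.
- exact: rst_refl.
- exact: rst_sym.
- exact: rst_trans IH1 IH2.
Qed.

Lemma lift_KE {X tX N} (A : TopKAtlas X tX N) (f : DU A -> DE A) :
  (forall a b, stepK A a b -> stepE A (f a) (f b)) ->
  forall a b, simK A a b -> simE A (f a) (f b).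
Proof.
move=> H a b; elim=> {a b} [a b Hab|a|a b _ IH|a b c _ IH1 _ IH2].
- apply: rst_step; exact: H.
- exact: rst_refl.
- exact: rst_sym.
- exact: rst_trans IH1 IH2.
Qed.

Definition prK {X tX N} (A : TopKAtlas X tX N) (p : VE A) : VK A := piVK A (prDU A (repE A p)).
Definition zK {X tX N} (A : TopKAtlas X tX N) (p : VK A) : VE A := piVE A (zrDU A (repK A p)).
Definition sK {X tX N} (A : TopKAtlas X tX N) (p : VK A) : VE A := piVE A (scDU A (repK A p)).

Lemma prK_spec {X tX N} (A : TopKAtlas X tX N) (HA : IsTopKAtlas A) e :
  prK A (piVE A e) = piVK A (prDU A e).
Proof.
rewrite /prK; apply: piVK_eq; apply: lift_EK; first exact: step_pr.
apply: piVE_inv; exact: repE_spec.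
Qed.

Lemma zK_spec {X tX N} (A : TopKAtlas X tX N) (HA : IsTopKAtlas A) t :
  zK A (piVK A t) = piVE A (zrDU A t).
Proof.
rewrite /zK; apply: piVE_eq; apply: lift_KE; first exact: step_zr.
apply: piVK_inv; exact: repK_spec.
Qed.

Lemma sK_spec {X tX N} (A : TopKAtlas X tX N) (HA : IsTopKAtlas A) t :
  sK A (piVK A t) = piVE A (scDU A t).
Proof.
rewrite /sK; apply: piVE_eq; apply: lift_KE; first exact: step_sc.
apply: piVK_inv; exact: repK_spec.
Qed.

Lemma Z_iff {X tX N} (A : TopKAtlas X tX N) (HA : IsTopKAtlas A) t :
  sK A (piVK A t) = zK A (piVK A t) <-> ZDU A t.
Proof.
rewrite sK_spec // zK_spec //; split => H.
- have H2 := piVE_inv A _ _ H.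
  have := proj2 (simE_ZE A HA _ _ H2).
  case: t {H H2} => I x; rewrite /ZE /ZDU /Zs /scDU /zrDU /=.
  have chI := ch_of A HA I.
  case: chI => _ [_ [_ [_ [_ [_ [_ [_ [_ [_ [_ [Hpz [Hps _]]]]]]]]]]]].
  rewrite Hpz Hps => H; apply: H; done.
- apply: piVE_eq. case: t H => I x; rewrite /ZDU /scDU /zrDU /= => ->. exact: rst_refl.
Qed.

Lemma prK_cont {X tX N} (A : TopKAtlas X tX N) (HA : IsTopKAtlas A) :
  continuous (VE_top A) (VK_top A) (prK A).
Proof.
move=> W HW I.
have -> : (fun e => W (prK A (piVE A (existT _ I e)))) =
          (fun e => (fun x => W (piVK A (existT _ I x))) (pr A e)).
  apply: pred_ext => e. by rewrite prK_spec.
have chI := ch_of A HA I.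
case: chI => _ [_ [_ [_ [_ [_ [_ [_ [Hc _]]]]]]]].
exact: (Hc _ (HW I)).
Qed.

Lemma zK_cont {X tX N} (A : TopKAtlas X tX N) (HA : IsTopKAtlas A) :
  continuous (VK_top A) (VE_top A) (zK A).
Proof.
move=> W HW I.
have -> : (fun x => W (zK A (piVK A (existT _ I x)))) =
          (fun x => (fun e => W (piVE A (existT _ I e))) (zr A x)).
  apply: pred_ext => e. by rewrite zK_spec.
have chI := ch_of A HA I.
case: chI => _ [_ [_ [_ [_ [_ [_ [_ [_ [Hc _]]]]]]]]].
exact: (Hc _ (HW I)).
Qed.

Lemma sK_cont {X tX N} (A : TopKAtlas X tX N) (HA : IsTopKAtlas A) :
  continuous (VK_top A) (VE_top A) (sK A).
Proof.
move=> W HW I.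
have -> : (fun x => W (sK A (piVK A (existT _ I x)))) =
          (fun x => (fun e => W (piVE A (existT _ I e))) (sc A x)).
  apply: pred_ext => e. by rewrite sK_spec.
have chI := ch_of A HA I.
case: chI => _ [_ [_ [_ [_ [_ [_ [_ [_ [_ [Hc _]]]]]]]]]].
exact: (Hc _ (HW I)).
Qed.

Lemma union2_open (T : Type) (op : topology T) (P Q : T -> Prop) :
  IsTopology op -> op P -> op Q -> op (fun x => P x \/ Q x).
Proof.
move=> [_ [_ Hu]] HP HQ.
have -> : (fun x => P x \/ Q x) = (fun x => exists B, (B = P \/ B = Q) /\ B x).
  apply: pred_ext => x; split.
  - case=> H; [exists P|exists Q]; tauto.
  - by case=> B [[->|->] H]; tauto.
apply: Hu => B [->|->] //.
Qed.

Lemma nZs_open {X tX N} (A : TopKAtlas X tX N) (HA : IsTopKAtlas A) (I : Idx A) :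
  tU A (proj1_sig I) (fun x => ~ Zs A x).
Proof.
have chI := ch_of A HA I.
case: chI => HtU [_ [_ [_ [_ [_ [_ [[d [Hd0 [Hd1 [Hds [Htr Hop]]]]] [_ [Hcz [Hcs _]]]]]]]]]].
have Hball : forall c r, tE A (proj1_sig I) (fun y => (d c y < r)%R).
  move=> c r; apply/Hop => y Hy; exists (r - d c y)%R; split; first lra.
  move=> z Hz; have := Htr c y z; lra.
have Hdd : forall c, d c c = 0%R by move=> c; apply/Hd1.
case: HtU => _ [Hint Hu].
have -> : (fun x => ~ Zs A x) = (fun x => exists B, (tU A (proj1_sig I) B /\ forall y, B y -> ~ Zs A y) /\ B x).
  apply: pred_ext => x; split; last first.
    by case=> B [[_ HB] Bx]; apply: HB.
  move=> Hx.
  have Hpos : (0 < d (sc A x) (zr A x))%R.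
    have := Hd0 (sc A x) (zr A x); case/Rle_lt_or_eq_dec => // H0.
    exfalso; apply: Hx; apply/Hd1; by rewrite H0.
  set r := (d (sc A x) (zr A x) / 2)%R.
  exists (fun y => (fun y => (d (sc A x) y < r)%R) (sc A y) /\ (fun y => (d (zr A x) y < r)%R) (zr A y)).
  split; [split|].
  - exact: (Hint _ _ (Hcs _ (Hball _ _)) (Hcz _ (Hball _ _))).
  - move=> y /= [H1 H2] Hy. rewrite /Zs in Hy. rewrite Hy in H1.
    have := Htr (sc A x) (zr A y) (zr A x). rewrite (Hds (zr A y) (zr A x)). rewrite /r in H1 H2. lra.
  - simpl; rewrite !Hdd /r; lra.
apply: Hu; tauto.
Qed.

Lemma quot_sub {X tX N} (A : TopKAtlas X tX N) (HA : IsTopKAtlas A) (V : VK A -> Prop) :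
  (forall p, V p -> sK A p = zK A p) ->
  (sub_open (VK_top A) (fun p => sK A p = zK A p) V <->
   sub_open (DU_top A) (ZDU A) (fun t => V (piVK A t))).
Proof.
move=> HV; split.
- case=> W [HW Hiff]; exists (fun t => W (piVK A t)); split; first exact: HW.
  move=> t Ht; apply: Hiff; exact/(Z_iff A HA).
- case=> W' [HW' Hiff].
  exists (fun p => ~ (sK A p = zK A p /\ ~ V p)); split.
  + move=> I.
    have -> : (fun x => ~ (sK A (piVK A (existT _ I x)) = zK A (piVK A (existT _ I x)) /\
                          ~ V (piVK A (existT _ I x)))) =
              (fun x => ~ Zs A x \/ W' (existT _ I x)).
      apply: pred_ext => x; rewrite (Z_iff A HA).
      have := Hiff (existT _ I x); rewrite /ZDU /=.
      case: (classic (Zs A x)) => Hz; case: (classic (V (piVK A (existT _ I x)))) => Hv; tauto.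
    have chI := ch_of A HA I.
    apply: union2_open; first by case: chI.
    exact: nZs_open.
    exact: HW' I.
  + move=> p Hp; case: (classic (V p)); tauto.
Qed.

Lemma DU0_to {X tX N} (A : TopKAtlas X tX N) a b :
  clos_refl_sym_trans (DU0 A) (step0 A) a b -> simK A (proj1_sig a) (proj1_sig b).
Proof.
elim=> {a b} [a b H|a|a b _ IH|a b c _ IH1 _ IH2].
- apply: rst_step; exact: H.
- exact: rst_refl.
- exact: rst_sym.
- exact: rst_trans IH1 IH2.
Qed.

Lemma DU0_from {X tX N} (A : TopKAtlas X tX N) (HA : IsTopKAtlas A) x y :
  simK A x y -> forall hx hy,
  clos_refl_sym_trans (DU0 A) (step0 A) (exist _ x hx) (exist _ y hy).
Proof.
elim=> {x y} [x y H|x|x y _ IH|x y z Hxy IH1 _ IH2] hx hy.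
- apply: rst_step; exact: H.
- rewrite (proof_irrelevance _ hx hy); exact: rst_refl.
- apply: rst_sym; exact: IH.
- have hz : ZDU A y by apply: (proj1 (proj1 (simK_Z A HA _ _ Hxy))).
  exact: rst_trans (IH1 hx hz) (IH2 hz hy).
Qed.

Lemma DU0_iff {X tX N} (A : TopKAtlas X tX N) (HA : IsTopKAtlas A) (a b : DU0 A) :
  piVK A (proj1_sig a) = piVK A (proj1_sig b) <->
  clos_refl_sym_trans (DU0 A) (step0 A) a b.
Proof.
split.
- move=> H; have := DU0_from A HA _ _ (piVK_inv A _ _ H) (proj2_sig a) (proj2_sig b).
  by case: a {H} => a ha; case: b => b hb.
- move=> H; apply: piVK_eq; exact: DU0_to.
Qed.

Lemma FI1 {X tX N} (A : TopKAtlas X tX N) i p : FI A [set i] p <-> F0 A i p.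
Proof.
split.
- move=> H; apply: H; exact: set11.
- move=> H j /set1P ->; exact: H.
Qed.

Lemma inK1 {X tX N} (A : TopKAtlas X tX N) i p : F0 A i p -> inK A [set i].
Proof.
move=> H; split; last by exists p; apply/FI1.
apply/set0Pn; exists i; exact: set11.
Qed.

Lemma psi_homeo {X tX N} (A : TopKAtlas X tX N) (HA : IsTopKAtlas A) (I : Idx A) :
  homeo_on (tU A (proj1_sig I)) (Zs A) tX (FI A (proj1_sig I)) (psi A).
Proof.
have chI := ch_of A HA I.
by case: chI => _ [_ [_ [_ [_ [_ [_ [_ [_ [_ [_ [_ [_ H]]]]]]]]]]]].
Qed.

Lemma ex_iota {X tX N} (A : TopKAtlas X tX N) (HA : IsTopKAtlas A) p :
  exists q : VK A, exists t : DU A, ZDU A t /\ psi A (projT2 t) = p /\ piVK A t = q.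
Proof.
have [i Hi] : exists i, F0 A i p by case: HA => _ [H _]; exact: H.
set I : Idx A := exist _ [set i] (inK1 A i p Hi).
have [g [_ [[Hg1 _] [_ Hfg]]]] := psi_homeo A HA I.
have HF : FI A (proj1_sig I) p by apply/FI1.
exists (piVK A (existT _ I (g p))); exists (existT _ I (g p)); split; last split => //.
- exact: Hg1.
- exact: Hfg.
Qed.

Definition iotaK {X tX N} (A : TopKAtlas X tX N) (HA : IsTopKAtlas A) (p : X) : VK A :=
  proj1_sig (constructive_indefinite_description _ (ex_iota A HA p)).

Lemma to_K {X tX N} (A : TopKAtlas X tX N) (HA : IsTopKAtlas A) (I K : Idx A) x :
  proj1_sig I \subset proj1_sig K -> Zs A x -> FI A (proj1_sig K) (psi A x) ->
  exists y, Zs A y /\ psi A y = psi A x /\ piVK A (existT _ I x) = piVK A (existT _ K y).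
Proof.
move=> Hs Hz HF.
case: (boolP (proj1_sig I == proj1_sig K)) => Heq.
- have HIK : I = K.
    case: I x Hs Hz HF Heq => I hI /=; case: K => K hK /= x _ _ _ /eqP Heq.
    by apply: subset_eq_compat.
  subst K; exists x; done.
- have Hp : proj1_sig I \proper proj1_sig K by rewrite properEneq Heq Hs.
  have [_ [HU [_ [_ [_ [_ [_ HZ]]]]]]] := cc_of A HA I K Hp.
  have Hu := proj1 (proj2 (HU x) (conj Hz HF)).
  have [HZ1 HZ2] := HZ x Hu Hz.
  exists (phi A _ _ x); split => //; split => //.
  apply: piVK_eq; apply: rst_step; rewrite /stepK /=; tauto.
Qed.

Lemma uniq_Z {X tX N} (A : TopKAtlas X tX N) (HA : IsTopKAtlas A) (I J : Idx A) x y :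
  Zs A x -> Zs A y -> psi A x = psi A y ->
  piVK A (existT _ I x) = piVK A (existT _ J y).
Proof.
move=> Hx Hy Hxy.
have [gI [[HfI _] _]] := psi_homeo A HA I.
have [gJ [[HfJ _] _]] := psi_homeo A HA J.
have FIx := HfI x Hx.
have FJy := HfJ y Hy.
have hK : inK A (proj1_sig I :|: proj1_sig J).
  split.
  - rewrite setU_eq0 negb_and; apply/orP; left; exact: (proj1 (proj2_sig I)).
  - exists (psi A x) => j; rewrite in_setU => /orP [H|H]; [exact: FIx|rewrite Hxy; exact: FJy].
set K : Idx A := exist _ _ hK.
have FK : FI A (proj1_sig K) (psi A x).
  move=> j; rewrite /= in_setU => /orP [H|H]; [exact: FIx|rewrite Hxy; exact: FJy].
have [y1 [Hy1 [Hp1 E1]]] := to_K A HA I K x (subsetUl _ _) Hx FK.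
have [y2 [Hy2 [Hp2 E2]]] := to_K A HA J K y (subsetUr _ _) Hy (ltac:(rewrite -Hxy; exact FK)).
rewrite E1 E2.
have [gK [_ [_ [HgK _]]]] := psi_homeo A HA K.
have -> : y1 = y2 by rewrite -(HgK y1 Hy1) -(HgK y2 Hy2) Hp1 Hp2 Hxy.
done.
Qed.

Lemma iota_spec {X tX N} (A : TopKAtlas X tX N) (HA : IsTopKAtlas A) (I : Idx A) x :
  Zs A x -> iotaK A HA (psi A x) = piVK A (existT _ I x).
Proof.
move=> Hx; rewrite /iotaK.
have [[J y] [Hy [Hp Hq]]] := proj2_sig (constructive_indefinite_description _ (ex_iota A HA (psi A x))).
rewrite -Hq; apply: uniq_Z => //.
Qed.

Definition ginv {X tX N} (A : TopKAtlas X tX N) (p : VK A) : X := psi A (projT2 (repK A p)).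

Lemma ginv_spec {X tX N} (A : TopKAtlas X tX N) (HA : IsTopKAtlas A) t :
  ZDU A t -> ginv A (piVK A t) = psi A (projT2 t).
Proof.
move=> Ht; rewrite /ginv.
have H := piVK_inv A _ _ (repK_spec A (piVK A t)).
have [H1 H2] := simK_Z A HA _ _ H.
apply: H2; tauto.
Qed.

Lemma iota_Z {X tX N} (A : TopKAtlas X tX N) (HA : IsTopKAtlas A) p :
  exists t, ZDU A t /\ psi A (projT2 t) = p /\ iotaK A HA p = piVK A t.
Proof.
have [t [Ht [Hp Hq]]] := proj2_sig (constructive_indefinite_description _ (ex_iota A HA p)).
by exists t.
Qed.

Lemma iota_homeo {X tX N} (A : TopKAtlas X tX N) (HA : IsTopKAtlas A) :
  IsTopology tX ->
  homeo_on tX (fun _ => True) (VK_top A) (fun p => sK A p = zK A p) (iotaK A HA).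
Proof.
move=> HtX0; exists (ginv A); split; [|split; [|split]].
- split.
  + move=> p _; have [t [Ht [_ ->]]] := iota_Z A HA p; exact/(Z_iff A HA).
  + move=> W HW; exists (fun p => W (iotaK A HA p)); split; last done.
    have HtX := HA; case: HtX => HF0 [Hcov _].
    have [_ [Hint Hu] ] := HtX0.
    have -> : (fun p => W (iotaK A HA p)) = (fun p => exists B : X -> Prop,
       (exists (i : 'I_N) (hi : inK A [set i]) (O : X -> Prop), tX O /\ (forall q, F0 A i q -> (W (iotaK A HA q) <-> O q)) /\
          B = (fun q => F0 A i q /\ O q)) /\ B p).
      apply: pred_ext => p; split; last first.
        by case=> B [[i [hi [O [_ [HO ->]]]]] [H1 H2]]; apply/HO.
      move=> Hp.
      have [i Hi] : exists i, F0 A i p by exact: Hcov.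
      set Ii : Idx A := exist _ [set i] (inK1 A i p Hi).
      have [g [_ [[Hg1 Hg2] [_ Hfg]]]] := psi_homeo A HA Ii.
      have [O [HO Hiff]] := Hg2 _ (HW Ii).
      have Hq : forall q, F0 A i q -> (W (iotaK A HA q) <-> O q).
        move=> q Hq; have Hq' : FI A (proj1_sig Ii) q by apply/FI1.
        rewrite -(Hiff q Hq') /=.
        have := iota_spec A HA Ii (g q) (Hg1 q Hq'); rewrite Hfg // => ->; done.
      exists (fun q => F0 A i q /\ O q); split; last by split => //; apply/Hq.
      by exists i, (inK1 A i p Hi), O.
    apply: Hu => B [i [hi [O [HO [_ ->]]]]].
    exact: Hint.
- split; first done.
  move=> O HO.
  have HV : forall p, (sK A p = zK A p /\ O (ginv A p)) -> sK A p = zK A p by move=> p [].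
  have [W [HW HWi]] : sub_open (VK_top A) (fun p => sK A p = zK A p)
                        (fun p => sK A p = zK A p /\ O (ginv A p)).
    apply/(quot_sub A HA _ HV).
    exists (fun t => exists O' : U A (proj1_sig (projT1 t)) -> Prop,
       (tU A _ O' /\ forall x, Zs A x -> (O (psi A x) <-> O' x)) /\ O' (projT2 t)).
    split.
    + move=> I.
      have [[_ [_ Hu]] _] := ch_of A HA I.
      have H := Hu (fun O' => tU A (proj1_sig I) O' /\ forall x, Zs A x -> (O (psi A x) <-> O' x)) (fun _ H => proj1 H).
      exact H.
    + case=> I x Hx /=.
      have [g [[_ Hc] _]] := psi_homeo A HA I.
      have [O1 [HO1 Hi1]] := Hc O HO.
      rewrite (ginv_spec A HA (existT _ I x) Hx) /=.
      have Hz : sK A (piVK A (existT _ I x)) = zK A (piVK A (existT _ I x)) by apply/(Z_iff A HA).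
      split.
      * move=> [_ Hp]; exists O1; split; first by split.
        by apply/Hi1.
      * move=> [O' [[_ HO'] Hx']]; split => //; by apply/HO'.
  exists W; split => // p Hp; rewrite -HWi //; tauto.
- move=> p _; have [t [Ht [Hp ->]]] := iota_Z A HA p; by rewrite ginv_spec.
- move=> y Hy.
  have Hr := repK_spec A y.
  have Hz : ZDU A (repK A y) by apply/(Z_iff A HA); rewrite Hr.
  rewrite /ginv; case: (repK A y) Hz Hr => I x Hz Hr; rewrite /= -Hr.
  exact: iota_spec.
Qed.

Theorem mainTheorem2 (X : Type) (tX : topology X) (N : nat)
  (A : TopKAtlas X tX N) :
  IsTopology tX -> compact_space tX -> metrizable tX ->
  IsTopKAtlas A ->
  exists (prK : VE A -> VK A) (zK sK : VK A -> VE A),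
    (* well defined: induced by pr_I, 0_I, s_I *)
    (forall e : DE A, prK (piVE A e) = piVK A (prDU A e)) /\
    (forall t : DU A, zK (piVK A t) = piVE A (zrDU A t)) /\
    (forall t : DU A, sK (piVK A t) = piVE A (scDU A t)) /\
    (* continuous *)
    continuous (VE_top A) (VK_top A) prK /\
    continuous (VK_top A) (VE_top A) zK /\
    continuous (VK_top A) (VE_top A) sK /\
    (* |pr| o |s| = |pr| o |0| = id *)
    (forall p, prK (sK p) = p) /\
    (forall p, prK (zK p) = p) /\
    (* Z = pi_K (sqcup_I {I} x s_I^-1(0_I)) *)
    (forall p, sK p = zK p <-> exists t : DU A, ZDU A t /\ piVK A t = p) /\
    (* the identifications on the zero set are exactly those generated by
       (I,x) ~ (J, phi_IJ x), x in U_IJ cap s_I^-1(0_I) *)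
    (forall a b : DU0 A,
       piVK A (proj1_sig a) = piVK A (proj1_sig b) <->
       clos_refl_sym_trans (DU0 A) (step0 A) a b) /\
    (* quotient topology on Z coincides with the subspace topology *)
    (forall V : VK A -> Prop, (forall p, V p -> sK p = zK p) ->
       (sub_open (VK_top A) (fun p => sK p = zK p) V <->
        sub_open (DU_top A) (ZDU A) (fun t => V (piVK A t)))) /\
    (* iota_K : well defined, and a homeomorphism X -> Z *)
    exists iota : X -> VK A,
      (forall (I : Idx A) (x : U A (proj1_sig I)),
         Zs A x -> iota (psi A x) = piVK A (existT _ I x)) /\
      homeo_on tX (fun _ => True) (VK_top A) (fun p => sK p = zK p) iota.
Proof.
move=> HtX _ _ HA.
exists (prK A), (zK A), (sK A).
split; first exact: prK_spec.
split; first exact: zK_spec.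
split; first exact: sK_spec.
split; first exact: prK_cont.
split; first exact: zK_cont.
split; first exact: sK_cont.
split.
  move=> p; have [[I x] <-] := VK_surj A p; rewrite sK_spec // prK_spec //.
  have [_ [_ [_ [_ [_ [_ [_ [_ [_ [_ [_ [Hpz [Hps _]]]]]]]]]]]]] := ch_of A HA I.
  by rewrite /prDU /scDU /= Hps.
split.
  move=> p; have [[I x] <-] := VK_surj A p; rewrite zK_spec // prK_spec //.
  have [_ [_ [_ [_ [_ [_ [_ [_ [_ [_ [_ [Hpz [Hps _]]]]]]]]]]]]] := ch_of A HA I.
  by rewrite /prDU /zrDU /= Hpz.
split.
  move=> p; split.
  - move=> Hp; exists (repK A p); split; last exact: repK_spec.
    apply/(Z_iff A HA); by rewrite repK_spec.
  - case=> t [Ht <-]; exact/(Z_iff A HA).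
split; first exact: DU0_iff.
split; first exact: quot_sub.
exists (iotaK A HA); split; first exact: iota_spec.
exact: iota_homeo.
Qed.
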